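(* Let $N\ge2$, $a\in\mathbb R$, $\sigma\in\mathbb R^N$ with $\sigma_j\ge0$ for all $j$ and $\sum_{j=1}^N\sigma_j\le(N-1)/2$. Then there exist a sequence $(f_n)\subset G^{\sigma,a}$, each with finitely many nonzero Fourier coefficients, and a function $\varphi\in C_c^\infty(\mathbb R)$ such that: (i) $\sup_n\|f_n\|_{G^{\sigma,a}}<\infty$; (ii) $\sum_{k\in\dot{\mathbb Z}^N}\hat f_n(k)\varphi(\alpha\cdot k)\to\infty$ as $n\to\infty$. The sum in (ii) is the pairing $\langle\mathcal F_x[f_n],\varphi\rangle$, where $\mathcal F_x[f_n]=\sum_k\hat f_n(k)\delta_{\alpha\cdot k}$. In particular, the series defining elements of $G^{\sigma,a}$ need not converge in $\mathcal S'(\mathbb R)$.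
   Context: Standing setting: fix $N$ and $\alpha\in\mathbb R^N$ with $\alpha\cdot k\neq0$ for all $k\in\dot{\mathbb Z}^N:=\mathbb Z^N\setminus\{0\}$. Write $\langle x\rangle=(1+|x|^2)^{1/2}$. $G^{\sigma,a}$ is the space of series $f=\sum_{k\in\dot{\mathbb Z}^N}\hat f(k)e^{i(\alpha\cdot k)x}$ with $$\|f\|_{G^{\sigma,a}}=\Big(\sum_k|\alpha\cdot k|^{2a}\prod_j\langle k_j\rangle^{2\sigma_j}|\hat f(k)|^2\Big)^{1/2}<\infty.$$ *)

(* Defs.v *)
From Stdlib Require Import Reals Lra Lia ZArith List.
Open Scope R_scope.

Definition lsum {A : Type} (g : A -> R) (l : list A) : R :=
  fold_right (fun x acc => g x + acc) 0 l.

Definition lprod {A : Type} (g : A -> R) (l : list A) : R :=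
  fold_right (fun x acc => g x * acc) 1 l.

(* Lattice points k in Z^N are lists of length N; alpha, sigma in R^N are
   lists of length N. *)
Definition dotZ (alpha : list R) (k : list Z) : R :=
  lsum (fun p => fst p * IZR (snd p)) (combine alpha k).

Definition dotZN (N : nat) (k : list Z) : Prop :=
  length k = N /\ k <> repeat 0%Z N.

(* Complex numbers as pairs (real part, imaginary part). *)
Definition Cplx := (R * R)%type.
Definition Cnorm2 (z : Cplx) : R := fst z * fst z + snd z * snd z.

(* prod_j <k_j>^{2 sigma_j}, with <x> = (1+x^2)^{1/2}, so <x>^{2s} = (1+x^2)^s *)
Definition weight (sigma : list R) (k : list Z) : R :=
  lprod (fun p => Rpower (1 + IZR (snd p) ^ 2) (fst p)) (combine sigma k).

(* Squared G^{sigma,a} norm of a finitely supported coefficient function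
   fhat whose support is contained in the duplicate-free list S of points
   of \dot Z^N. *)
Definition Gnorm2 (alpha sigma : list R) (a : R) (S : list (list Z))
    (fhat : list Z -> Cplx) : R :=
  lsum (fun k => Rpower (Rabs (dotZ alpha k)) (2 * a) * weight sigma k
                 * Cnorm2 (fhat k)) S.

Definition pairing (alpha : list R) (S : list (list Z))
    (fhat : list Z -> Cplx) (phi : R -> R) : Cplx :=
  (lsum (fun k => fst (fhat k) * phi (dotZ alpha k)) S,
   lsum (fun k => snd (fhat k) * phi (dotZ alpha k)) S).

Definition smooth (phi : R -> R) : Prop :=
  exists D : nat -> R -> R, D 0%nat = phi /\
    forall m x, derivable_pt_lim (D m) x (D (S m) x).

Definition compact_support (phi : R -> R) : Prop :=
  exists R0, forall x, R0 < Rabs x -> phi x = 0.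

(* Main.v *)
Require Import Defs.
From Stdlib Require Import Reals Lra Lia ZArith List.
From Coquelicot Require Import Coquelicot.
Open Scope R_scope.

Fixpoint peval (l : list R) (x : R) : R :=
  match l with nil => 0 | c :: l' => c + x * peval l' x end.
Fixpoint padd (p q : list R) : list R :=
  match p, q with
  | nil, _ => q | _, nil => p
  | a :: p', b :: q' => (a + b) :: padd p' q' end.
Definition pscale (c : R) (p : list R) := map (Rmult c) p.
Fixpoint pmul (p q : list R) : list R :=
  match p with nil => nil | a :: p' => padd (pscale a q) (0 :: pmul p' q) end.
Fixpoint pder (p : list R) : list R :=
  match p with nil => nil | c :: l => padd l (0 :: pder l) end.

Lemma peval_add p q x : peval (padd p q) x = peval p x + peval q x.
Proof. revert q; induction p as [|a p IH]; intros [|b q]; simpl; try ring.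
rewrite IH; ring. Qed.
Lemma peval_scale c p x : peval (pscale c p) x = c * peval p x.
Proof. unfold pscale; induction p as [|a p IH]; simpl; [ring|]. rewrite IH; ring. Qed.
Lemma peval_mul p q x : peval (pmul p q) x = peval p x * peval q x.
Proof. induction p as [|a p IH]; simpl; [ring|].
rewrite peval_add, peval_scale; simpl; rewrite IH; ring. Qed.
Lemma peval_der p x : is_derive (peval p) x (peval (pder p) x).
Proof. induction p as [|c p IH]; simpl.
- apply (is_derive_const 0).
- rewrite peval_add; simpl.
  change (is_derive (fun x => c + x * peval p x) x (peval p x + (0 + x * peval (pder p) x))).
  auto_derive. exists (peval (pder p) x); exact IH.
  replace (Derive (fun x => peval p x) x) with (peval (pder p) x). ring. symmetry; apply is_derive_unique; exact IH.
Qed.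

Fixpoint sumabs (l : list R) : R := match l with nil => 0 | c :: l' => Rabs c + sumabs l' end.
Lemma peval_bound p x : Rabs x <= 1 -> Rabs (peval p x) <= sumabs p.
Proof. intro Hx; induction p as [|c p IH]; simpl. rewrite Rabs_R0; lra.
eapply Rle_trans. apply Rabs_triang. apply Rplus_le_compat_l.
rewrite Rabs_mult. assert (0 <= Rabs (peval p x)) by apply Rabs_pos.
assert (0 <= Rabs x) by apply Rabs_pos. nra. Qed.
Lemma sumabs_nonneg p : 0 <= sumabs p.
Proof. induction p; simpl; [lra|]. pose proof (Rabs_pos a); lra. Qed.

Definition U : list R := 0 :: 1 :: (-1) :: nil.
Definition U1 : list R := 1 :: (-2) :: nil.
Fixpoint P (m : nat) : list R :=
  match m with
  | O => 1 :: nil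
  | S m' => padd (padd (pmul (pder (P m')) (pmul U U))
                 (pscale (- 2 * INR m') (pmul (P m') (pmul U1 U))))
                 (pmul (P m') U1)
  end.

Definition u (x : R) := x - x * x.
Lemma peval_U x : peval U x = u x. Proof. unfold U, u; simpl; ring. Qed.
Lemma peval_U1 x : peval U1 x = 1 - 2 * x. Proof. unfold U1; simpl; ring. Qed.

Lemma P_S m x : peval (P (S m)) x =
  peval (pder (P m)) x * (u x * u x) - 2 * INR m * peval (P m) x * (1 - 2*x) * u x
  + peval (P m) x * (1 - 2 * x).
Proof. cbn [P]. rewrite !peval_add, peval_scale, !peval_mul, !peval_U, !peval_U1. ring. Qed.

Definition Dform (m : nat) (x : R) := peval (P m) x * / (u x) ^ (2 * m) * exp (- / u x).

Definition Dm (m : nat) (x : R) : R :=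
  if Rlt_dec 0 x then if Rlt_dec x 1 then Dform m x else 0 else 0.

Lemma pow_pred_aux n v : INR n * v ^ Init.Nat.pred n * v = INR n * v ^ n.
Proof. destruct n; simpl; ring. Qed.

Lemma Dform_der m x : 0 < u x -> is_derive (Dform m) x (Dform (S m) x).
Proof.
  intro Hu. unfold Dform, u in *.
  pose proof (peval_der (P m) x) as Hp.
  auto_derive.
  - split. exists (peval (pder (P m)) x); exact Hp.
    replace (x + - (x*x)) with (x - x*x) by ring.
    split. apply pow_nonzero. lra. split; [lra|exact I].
  - replace (Derive (fun x => peval (P m) x) x) with (peval (pder (P m)) x) by (symmetry; apply is_derive_unique; exact Hp).
    rewrite P_S. unfold u.
    replace (x + - (x*x)) with (x - x*x) by ring.
    replace (m + (m + 0))%nat with (2 * m)%nat by lia.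
    replace (2 * S m)%nat with (S (S (2 * m))) by lia.
    set (v := x - x * x) in *.
    assert (Hv : v ^ (2 * m) <> 0) by (apply pow_nonzero; lra).
    assert (E := pow_pred_aux (2 * m) v).
    replace (INR (2 * m) * v ^ Init.Nat.pred (2 * m)) with (INR (2 * m) * v ^ (2 * m) / v)
      by (rewrite <- E; field; lra).
    simpl pow. clearbody v. rewrite mult_INR. replace (m + (m + 0))%nat with (2 * m)%nat by lia. set (A := v ^ (2 * m)) in *. simpl INR. field. split; lra.
Qed.


Lemma exp_mul_nat n z : exp (INR n * z) = exp z ^ n.
Proof. induction n; simpl pow. rewrite Rmult_0_l, exp_0; ring.
rewrite S_INR, Rmult_plus_distr_r, Rmult_1_l, exp_plus, IHn; ring. Qed.

Lemma exp_pow_bound k y : 0 < y -> y ^ k * exp (- y) <= (INR k + 1) ^ (S k) / y.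
Proof.
  intro Hy. set (n := S k).
  assert (Hn : 0 < INR n) by (unfold n; rewrite S_INR; pose proof (pos_INR k); lra).
  assert (He : (y / INR n) ^ n <= exp y).
  { replace y with (INR n * (y / INR n)) at 2 by (field; lra).
    rewrite exp_mul_nat. apply pow_incr. split.
    apply Rlt_le, Rdiv_lt_0_compat; lra.
    pose proof (exp_ineq1_le (y / INR n)). assert (0 < y / INR n) by (apply Rdiv_lt_0_compat; lra). lra. }
  replace (INR k + 1) with (INR n) by (unfold n; rewrite S_INR; ring).
  rewrite exp_Ropp.
  assert (E1 : (y / INR n) ^ n * INR n ^ n = y ^ n).
  { rewrite <- Rpow_mult_distr. f_equal. field. lra. }
  assert (0 < exp y) by apply exp_pos.
  assert (0 < INR n ^ n) by (apply pow_lt; lra).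
  assert (H2 : y ^ n <= exp y * INR n ^ n).
  { rewrite <- E1. apply Rmult_le_compat_r; lra. }
  replace (y ^ n) with (y * y ^ k) in H2 by reflexivity.
  assert (0 < y ^ k) by (apply pow_lt; lra).
  apply (Rmult_le_reg_r (exp y * y)). nra.
  replace (y ^ k * / exp y * (exp y * y)) with (y * y ^ k) by (field; lra).
  replace (INR n ^ n / y * (exp y * y)) with (exp y * INR n ^ n) by (field; lra).
  exact H2.
Qed.

Lemma deriv_zero_crit (f : R -> R) x0 : f x0 = 0 ->
  (forall eps, 0 < eps -> exists delta, 0 < delta /\
     forall h, h <> 0 -> Rabs h < delta -> Rabs (f (x0 + h)) <= eps * Rabs h) ->
  derivable_pt_lim f x0 0.
Proof.
  intros H0 H eps Heps.
  destruct (H (eps / 2)) as [d [Hd Hh]]; [lra|].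
  exists (mkposreal d Hd). intros h Hh0 Hhd. simpl in Hhd.
  rewrite H0. specialize (Hh h Hh0 Hhd).
  replace ((f (x0 + h) - 0) / h - 0) with (f (x0 + h) / h) by (field; auto).
  unfold Rdiv. rewrite Rabs_mult, Rabs_inv.
  assert (0 < Rabs h) by (apply Rabs_pos_lt; auto).
  apply (Rmult_lt_reg_r (Rabs h)); auto.
  replace (Rabs (f (x0 + h)) * / Rabs h * Rabs h) with (Rabs (f (x0 + h))) by (field; lra).
  nra.
Qed.

Lemma Dform_small m t eps : 0 < eps -> 0 < u t -> Rabs t <= 1 ->
  u t < eps / ((sumabs (P m) + 1) * (INR (2 * m + 1) + 1) ^ (S (2 * m + 1))) ->
  Rabs (Dform m t) <= eps * u t.
Proof.
  intros He Hu Ht Hsmall.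
  set (K := sumabs (P m) + 1). set (C := (INR (2 * m + 1) + 1) ^ (S (2 * m + 1))).
  assert (HK : 0 < K) by (unfold K; pose proof (sumabs_nonneg (P m)); lra).
  assert (HC : 0 < C) by (unfold C; apply pow_lt; pose proof (pos_INR (2*m+1)); lra).
  set (y := / u t).
  assert (Hy : 0 < y) by (apply Rinv_0_lt_compat; auto).
  pose proof (exp_pow_bound (2 * m + 1) y Hy) as Hb. fold C in Hb.
  unfold Dform. rewrite !Rabs_mult.
  rewrite (Rabs_right (exp _)) by (left; apply exp_pos).
  rewrite Rabs_inv, <- RPow_abs, (Rabs_right (u t)) by lra.
  pose proof (peval_bound (P m) t Ht) as Hp.
  replace (/ u t ^ (2 * m)) with (y ^ (2 * m)) by (unfold y; rewrite pow_inv; reflexivity).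
  replace (- / u t) with (- y) by reflexivity.
  replace (y ^ (2 * m + 1)) with (y ^ (2 * m) * y) in Hb by (rewrite pow_add; ring).
  assert (0 < y ^ (2 * m)) by (apply pow_lt; auto).
  assert (0 < exp (- y)) by apply exp_pos.
  assert (Hyu : y * u t = 1) by (unfold y; field; lra).
  assert (H1 : Rabs (peval (P m) t) * y ^ (2 * m) * exp (- y) <= K * (C / y) / y).
  { assert (y ^ (2 * m) * exp (- y) <= C / y / y).
    { apply (Rmult_le_reg_r y); auto. replace (C / y / y * y) with (C / y) by (field; lra). nra. }
    assert (0 <= Rabs (peval (P m) t)) by apply Rabs_pos.
    replace (K * (C / y) / y) with (K * (C / y / y)) by (field; lra).
    apply Rle_trans with (K * (y ^ (2 * m) * exp (- y))).
    { assert (Rabs (peval (P m) t) <= K) by (unfold K; lra). rewrite Rmult_assoc. apply Rmult_le_compat_r; nra. } apply Rmult_le_compat_l; lra. }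
  eapply Rle_trans. exact H1.
  replace (K * (C / y) / y) with (K * C * u t * u t) by (unfold y; field; lra).
  assert (K * C * u t < eps).
  { apply (Rmult_lt_reg_r (/ (K * C))). apply Rinv_0_lt_compat; nra.
    replace (K * C * u t * / (K * C)) with (u t) by (field; lra). exact Hsmall. }
  nra.
Qed.

Lemma Dm_out m x : (x <= 0 \/ 1 <= x) -> Dm m x = 0.
Proof. intro H. unfold Dm. destruct (Rlt_dec 0 x); [|reflexivity].
destruct (Rlt_dec x 1); [lra|reflexivity]. Qed.
Lemma Dm_in m x : 0 < x < 1 -> Dm m x = Dform m x.
Proof. intro H. unfold Dm. destruct (Rlt_dec 0 x); [|lra].
destruct (Rlt_dec x 1); [reflexivity|lra]. Qed.

Lemma Dm_der_edge m x0 : (x0 = 0 \/ x0 = 1) ->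
  derivable_pt_lim (Dm m) x0 0.
Proof.
  intro Hx0. apply deriv_zero_crit. apply Dm_out; lra.
  intros eps Heps.
  set (K := (sumabs (P m) + 1) * (INR (2 * m + 1) + 1) ^ (S (2 * m + 1))).
  assert (HK : 0 < K).
  { unfold K. pose proof (sumabs_nonneg (P m)). pose proof (pos_INR (2*m+1)).
    apply Rmult_lt_0_compat. lra. apply pow_lt; lra. }
  exists (eps / K). split. apply Rdiv_lt_0_compat; lra.
  intros h Hh0 Hh.
  destruct (Rlt_dec 0 (x0 + h)) as [H1|H1]; [destruct (Rlt_dec (x0 + h) 1) as [H2|H2]|].
  - rewrite Dm_in by lra. set (t := x0 + h) in *.
    assert (Hu : 0 < u t) by (unfold u; nra).
    assert (Hut : u t <= Rabs h).
    { unfold u. destruct Hx0; subst x0.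
      - unfold t in *. rewrite Rabs_right by lra. nra.
      - unfold t in *. rewrite Rabs_left by lra. nra. }
    eapply Rle_trans. apply (Dform_small m t eps); auto.
    rewrite Rabs_right; lra. fold K. lra.
    apply Rmult_le_compat_l; lra.
  - rewrite Dm_out by lra. rewrite Rabs_R0. apply Rmult_le_pos; [lra|apply Rabs_pos].
  - rewrite Dm_out by lra. rewrite Rabs_R0. apply Rmult_le_pos; [lra|apply Rabs_pos].
Qed.

Lemma Dm_der m x : derivable_pt_lim (Dm m) x (Dm (S m) x).
Proof.
  destruct (Rtotal_order x 0) as [Hx|[Hx|Hx]].
  - rewrite Dm_out by lra. apply is_derive_Reals.
    apply (is_derive_ext_loc (fun _ => 0)). apply (locally_interval _ x m_infty 0); simpl; auto.
    intros y _ Hy. rewrite Dm_out by lra. reflexivity.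
    auto_derive; auto.
  - subst x. rewrite Dm_out by lra. apply Dm_der_edge; auto.
  - destruct (Rtotal_order x 1) as [Hx1|[Hx1|Hx1]].
    + rewrite Dm_in by lra. apply is_derive_Reals.
      apply (is_derive_ext_loc (Dform m)). apply (locally_interval _ x 0 1); simpl; auto.
      intros y Hy1 Hy2. rewrite Dm_in by (simpl in *; lra). reflexivity.
      apply Dform_der. unfold u; nra.
    + subst x. rewrite Dm_out by lra. apply Dm_der_edge; auto.
    + rewrite Dm_out by lra. apply is_derive_Reals.
      apply (is_derive_ext_loc (fun _ => 0)). apply (locally_interval _ x 1 p_infty); simpl; auto.
      intros y Hy _. rewrite Dm_out by (simpl in *; lra). reflexivity.
      auto_derive; auto.
Qed.

Lemma lsum_app {A} (g : A -> R) l1 l2 : lsum g (l1 ++ l2) = lsum g l1 + lsum g l2.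
Proof. induction l1; simpl; [ring|]. unfold lsum in *; simpl. rewrite IHl1; ring. Qed.
Lemma lsum_flat_map {A B} (g : B -> R) (f : A -> list B) l :
  lsum g (flat_map f l) = lsum (fun x => lsum g (f x)) l.
Proof. induction l; simpl; [reflexivity|]. rewrite lsum_app, IHl. reflexivity. Qed.
Lemma lsum_map {A B} (g : B -> R) (f : A -> B) l : lsum g (map f l) = lsum (fun x => g (f x)) l.
Proof. induction l; simpl; [reflexivity|]. unfold lsum in *; simpl. rewrite IHl; reflexivity. Qed.
Lemma lsum_ge {A} (g : A -> R) l c : (forall x, In x l -> c <= g x) -> INR (length l) * c <= lsum g l.
Proof. induction l; intro H; unfold lsum in *; cbn [length fold_right]. simpl; lra.
rewrite S_INR. assert (c <= g a) by (apply H; left; auto).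
assert (INR (length l) * c <= fold_right (fun x acc => g x + acc) 0 l) by (apply IHl; intros; apply H; right; auto). lra. Qed.
Lemma lsum_ext_in {A} (g h : A -> R) l : (forall x, In x l -> g x = h x) -> lsum g l = lsum h l.
Proof. induction l; intro H; simpl. reflexivity. unfold lsum in *; simpl.
rewrite H by (left; auto). rewrite IHl; auto. intros; apply H; right; auto. Qed.
Lemma lsum_scal {A} (g : A -> R) l c : lsum (fun x => g x * c) l = lsum g l * c.
Proof. induction l; simpl; unfold lsum in *; simpl; [ring|]. rewrite IHl; ring. Qed.
Lemma lsum_zero {A} l : lsum (fun _ : A => 0) l = 0.
Proof. induction l; simpl; unfold lsum in *; simpl; [ring|]. rewrite IHl; ring. Qed.

Lemma NoDup_flat_map' {A B} (f : A -> list B) l : NoDup l -> (forall x, NoDup (f x)) ->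
  (forall x y a, In x l -> In y l -> x <> y -> In a (f x) -> ~ In a (f y)) ->
  NoDup (flat_map f l).
Proof.
  induction l as [|x l IH]; intros Hl Hf Hd; simpl. constructor.
  inversion Hl; subst. apply NoDup_app. apply Hf. apply IH; auto.
  { intros x0 y a Hx Hy Hxy. apply Hd; auto; right; auto. }
  intros a Ha Hin. apply in_flat_map in Hin. destruct Hin as [y [Hy Hay]].
  apply (Hd x y a); auto. left; auto. right; auto. intro; subst; auto.
Qed.
Lemma NoDup_map_inj {A B} (f : A -> B) l : (forall x y, f x = f y -> x = y) -> NoDup l -> NoDup (map f l).
Proof. intros Hi Hl; induction Hl; simpl; constructor; auto.
intro H'. apply in_map_iff in H'. destruct H' as [y [Hy Hy']]. apply Hi in Hy; subst; auto. Qed.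

Fixpoint box (dim : nat) (lo : Z) (cnt : nat) : list (list Z) :=
  match dim with
  | O => nil :: nil
  | Datatypes.S d => flat_map (fun i => map (cons (lo + Z.of_nat i)%Z) (box d lo cnt)) (seq 0 cnt)
  end.

Lemma length_flat_map_const {A B} (f : A -> list B) l c :
  (forall x, length (f x) = c) -> length (flat_map f l) = (length l * c)%nat.
Proof. intro H; induction l; simpl; auto. rewrite length_app, H, IHl; lia. Qed.

Lemma box_length d lo cnt : length (box d lo cnt) = (cnt ^ d)%nat.
Proof. induction d; simpl. reflexivity.
rewrite (length_flat_map_const _ _ (cnt ^ d)). rewrite length_seq; lia.
intro; rewrite length_map; auto. Qed.

Lemma box_in d lo cnt v : In v (box d lo cnt) ->
  length v = d /\ forall z, In z v -> (lo <= z < lo + Z.of_nat cnt)%Z.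
Proof. revert v; induction d; simpl; intros v Hv.
- destruct Hv as [Hv|[]]; subst; simpl; split; auto; intros z [].
- apply in_flat_map in Hv. destruct Hv as [i [Hi Hv]]. apply in_map_iff in Hv.
  destruct Hv as [w [Hw Hw']]. subst v. apply IHd in Hw'. destruct Hw' as [Hl Hz].
  apply in_seq in Hi. simpl. split. lia.
  intros z [Hz'|Hz']. subst; lia. auto.
Qed.

Lemma box_nodup d lo cnt : NoDup (box d lo cnt).
Proof. induction d; simpl. constructor; auto; constructor.
apply NoDup_flat_map'. apply seq_NoDup.
intros i0; apply NoDup_map_inj; auto. intros x y H; inversion H; auto.
intros x y a _ _ Hxy Ha Ha'. apply in_map_iff in Ha, Ha'.
destruct Ha as [w [Hw _]]; destruct Ha' as [w' [Hw' _]]. subst a. inversion Hw'. lia.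
Qed.

Lemma dotZ_cons b a z d : dotZ (b :: a) (z :: d) = b * IZR z + dotZ a d.
Proof. reflexivity. Qed.

Lemma dotZ_bound a d X : 0 <= X -> (forall z, In z d -> Rabs (IZR z) <= X) ->
  Rabs (dotZ a d) <= lsum Rabs a * X.
Proof.
  revert d; induction a as [|b a IH]; intros d HX Hd.
  - unfold dotZ, lsum; simpl. rewrite Rabs_R0; lra.
  - destruct d as [|z d].
    + unfold dotZ, lsum; simpl. rewrite Rabs_R0. 
      assert (0 <= lsum Rabs (b :: a)).
      { clear. induction (b :: a); unfold lsum in *; simpl. lra. pose proof (Rabs_pos a0); lra. }
      unfold lsum in H; simpl in H. nra.
    + rewrite dotZ_cons. eapply Rle_trans. apply Rabs_triang.
      rewrite Rabs_mult. unfold lsum at 1; simpl. fold (lsum Rabs a).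
      assert (Rabs (IZR z) <= X) by (apply Hd; left; auto).
      assert (Rabs (dotZ a d) <= lsum Rabs a * X) by (apply IH; auto; intros; apply Hd; right; auto).
      pose proof (Rabs_pos b). nra.
Qed.

Lemma dotZ_repeat0 a n : dotZ a (repeat 0%Z n) = 0.
Proof. revert n; induction a as [|b a IHa]; intros [|n]; unfold dotZ, lsum; simpl; try ring.
fold (lsum (fun p : R * Z => fst p * IZR (snd p)) (combine a (repeat 0%Z n))).
fold (dotZ a (repeat 0%Z n)). rewrite IHa. ring. Qed.

Lemma weight_bound s k X : length s = length k -> (forall x, In x s -> 0 <= x) ->
  (forall z, In z k -> Rabs (IZR z) <= X) ->
  weight s k <= Rpower (1 + X ^ 2) (lsum (fun x => x) s).
Proof.
  revert k; induction s as [|x s IH]; intros k Hl Hs Hk.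
  - unfold weight, lprod, lsum; simpl. rewrite Rpower_O. lra. nra.
  - destruct k as [|z k]; [simpl in Hl; lia|].
    unfold weight, lprod, lsum; simpl.
    fold (lprod (fun p : R * Z => Rpower (1 + IZR (snd p) ^ 2) (fst p)) (combine s k)).
    fold (weight s k). fold (lsum (fun x => x) s).
    rewrite Rpower_plus.
    assert (H1 : Rpower (1 + IZR z ^ 2) x <= Rpower (1 + X ^ 2) x).
    { apply Rle_Rpower_l. apply Hs; left; auto.
      assert (Rabs (IZR z) <= X) by (apply Hk; left; auto).
      split. nra. rewrite <- (pow2_abs (IZR z)).
      pose proof (Rabs_pos (IZR z)). nra. }
    assert (H2 : weight s k <= Rpower (1 + X ^ 2) (lsum (fun x => x) s)).
    { apply IH. simpl in Hl; lia. intros; apply Hs; right; auto. intros; apply Hk; right; auto. }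
    assert (0 <= weight s k).
    { unfold weight. clear. generalize (combine s k). induction l; unfold lprod; cbn [fold_right]. lra.
      fold (lprod (fun p : R * Z => Rpower (1 + IZR (snd p) ^ 2) (fst p)) l).
      assert (0 < Rpower (1 + IZR (snd a) ^ 2) (fst a)) by (unfold Rpower; apply exp_pos). nra. }
    assert (0 <= Rpower (1 + IZR z ^ 2) x) by (unfold Rpower; left; apply exp_pos).
    apply Rmult_le_compat; auto.
Qed.

Definition zsel (b : R) (a : list R) (d : list Z) : Z := up ((2 * Rabs b - dotZ a d) / b).
Definition mk b a d := zsel b a d :: d.
Definition block b a N1 (j : nat) := map (mk b a) (box N1 (Z.of_nat (2 ^ j)) (2 ^ j)).
Definition Sset b a N1 n := flat_map (block b a N1) (seq 0 (Datatypes.S n)).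

Lemma zsel_val b a d : b <> 0 -> Rabs b <= b * IZR (zsel b a d) + dotZ a d <= 3 * Rabs b.
Proof.
  intro Hb. unfold zsel. set (y := (2 * Rabs b - dotZ a d) / b).
  destruct (archimed y) as [H1 H2].
  assert (Hy : b * y = 2 * Rabs b - dotZ a d) by (unfold y; field; auto).
  destruct (Rlt_or_le 0 b) as [Hp|Hn].
  - rewrite Rabs_right in * by lra. nra.
  - assert (b < 0) by lra. rewrite Rabs_left in * by lra. nra.
Qed.

Lemma zsel_bound b a d : b <> 0 -> Rabs (IZR (zsel b a d)) <= 3 + Rabs (dotZ a d) / Rabs b.
Proof.
  intro Hb. unfold zsel. set (y := (2 * Rabs b - dotZ a d) / b).
  destruct (archimed y) as [H1 H2].
  assert (Hab : 0 < Rabs b) by (apply Rabs_pos_lt; auto).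
  assert (Hy : Rabs y <= 2 + Rabs (dotZ a d) / Rabs b).
  { unfold y. unfold Rdiv. rewrite Rabs_mult, Rabs_inv.
    replace (2 + Rabs (dotZ a d) * / Rabs b) with ((2 * Rabs b + Rabs (dotZ a d)) * / Rabs b) by (field; lra).
    apply Rmult_le_compat_r. left; apply Rinv_0_lt_compat; auto.
    pose proof (Rabs_triang (2*Rabs b) (- dotZ a d)) as T. rewrite Rabs_Ropp in T.
    assert (Rabs (2*Rabs b) = 2*Rabs b) by (apply Rabs_right; lra).
    unfold Rminus. lra. }
  assert (Rabs (IZR (up y)) <= Rabs y + 1).
  { unfold Rabs at 1. destruct (Rcase_abs (IZR (up y))); pose proof (Rle_abs y); pose proof (Rle_abs (- y)); rewrite Rabs_Ropp in *; lra. }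
  lra.
Qed.

Lemma Sset_in b a N1 n k : In k (Sset b a N1 n) ->
  exists j d, (j <= n)%nat /\ k = mk b a d /\ In d (box N1 (Z.of_nat (2 ^ j)) (2 ^ j)).
Proof.
  unfold Sset. intro H. apply in_flat_map in H. destruct H as [j [Hj Hk]].
  apply in_seq in Hj. unfold block in Hk. apply in_map_iff in Hk. destruct Hk as [d [Hd Hd']].
  exists j, d. split. lia. auto.
Qed.

Lemma Sset_nodup b a N1 n : (1 <= N1)%nat -> NoDup (Sset b a N1 n).
Proof.
  intro HN1. unfold Sset. apply NoDup_flat_map'. apply seq_NoDup.
  - intro j. unfold block. apply NoDup_map_inj. intros x y H; inversion H; auto. apply box_nodup.
  - intros i j k _ _ Hij Hi Hj. unfold block in Hi, Hj.
    apply in_map_iff in Hi, Hj. destruct Hi as [d [Hd Hd']]. destruct Hj as [e [He He']].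
    subst k. unfold mk in He. inversion He. subst e.
    apply box_in in Hd', He'. destruct Hd' as [Hl Hz]. destruct He' as [_ Hz'].
    destruct d as [|h d]; [simpl in Hl; lia|].
    specialize (Hz h (or_introl eq_refl)). specialize (Hz' h (or_introl eq_refl)).
    assert (Hp : forall p q, (p < q)%nat -> (2 ^ p + 2 ^ p <= 2 ^ q)%nat).
    { intros p q Hpq. replace (2 ^ p + 2 ^ p)%nat with (2 ^ (Datatypes.S p))%nat by (simpl; lia).
      apply Nat.pow_le_mono_r; lia. }
    destruct (Nat.lt_trichotomy i j) as [Hlt|[Heq|Hgt]].
    + apply Hp in Hlt. lia.
    + auto.
    + apply Hp in Hgt. lia.
Qed.

Lemma lsum_abs_nonneg a : 0 <= lsum Rabs a.
Proof. induction a; unfold lsum in *; simpl. lra. pose proof (Rabs_pos a); lra. Qed.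

Lemma member_entries b a N1 M d : b <> 0 -> (1 <= M)%nat ->
  In d (box N1 (Z.of_nat M) M) ->
  forall e, In e (mk b a d) -> Rabs (IZR e) <= (3 + 2 * lsum Rabs a / Rabs b) * INR M.
Proof.
  intros Hb HM Hd e He.
  assert (Hab : 0 < Rabs b) by (apply Rabs_pos_lt; auto).
  assert (HMr : 1 <= INR M) by (apply (le_INR 1); auto).
  assert (HL := lsum_abs_nonneg a).
  assert (HLb : 0 <= lsum Rabs a / Rabs b) by (unfold Rdiv; apply Rmult_le_pos; [lra|left; apply Rinv_0_lt_compat; lra]).
  apply box_in in Hd. destruct Hd as [_ Hz].
  assert (Hd2 : forall z, In z d -> Rabs (IZR z) <= 2 * INR M).
  { intros z Hzd. specialize (Hz z Hzd). rewrite INR_IZR_INZ.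
    assert (IZR (Z.of_nat M) <= IZR z) by (apply IZR_le; lia).
    assert (IZR z <= 2 * IZR (Z.of_nat M)) by (rewrite <- mult_IZR; apply IZR_le; lia).
    assert (1 <= IZR (Z.of_nat M)) by (rewrite <- INR_IZR_INZ; auto).
    rewrite Rabs_right; lra. }
  destruct He as [He|He].
  - subst e. eapply Rle_trans. apply zsel_bound; auto.
    assert (Rabs (dotZ a d) <= lsum Rabs a * (2 * INR M)) by (apply dotZ_bound; auto; lra).
    assert (Rabs (dotZ a d) / Rabs b <= lsum Rabs a / Rabs b * (2 * INR M)).
    { unfold Rdiv. replace (lsum Rabs a * / Rabs b * (2 * INR M)) with (lsum Rabs a * (2 * INR M) * / Rabs b) by ring.
      apply Rmult_le_compat_r; [left; apply Rinv_0_lt_compat|]; lra. }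
    nra.
  - apply Hd2 in He. nra.
Qed.

Definition phiD (B : R) (m : nat) (x : R) := Dm m (x / B) * (/ B) ^ m.

Lemma phi_smooth B : B <> 0 -> smooth (phiD B 0).
Proof.
  intro HB. exists (phiD B). split; [reflexivity|].
  intros m x. unfold phiD.
  apply is_derive_Reals.
  assert (Hd : is_derive (Dm m) (x / B) (Dm (Datatypes.S m) (x / B))) by apply is_derive_Reals, Dm_der.
  auto_derive.
  - exists (Dm (Datatypes.S m) (x / B)); exact Hd.
  - replace (Derive (fun x0 : R => Dm m x0) (x * / B)) with (Dm (Datatypes.S m) (x / B)).
    simpl. field; auto. symmetry. apply is_derive_unique. exact Hd.
Qed.

Lemma phi_supp B : 0 < B -> compact_support (phiD B 0).
Proof.
  intro HB. exists B. intros x Hx. unfold phiD. rewrite Dm_out. ring.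
  destruct (Rcase_abs x).
  - rewrite Rabs_left in Hx by auto. left. apply (Rmult_le_reg_r B); auto.
    unfold Rdiv; rewrite Rmult_assoc, Rinv_l by lra. lra.
  - rewrite Rabs_right in Hx by auto. right. apply (Rmult_le_reg_r B); auto.
    unfold Rdiv; rewrite Rmult_assoc, Rinv_l by lra. lra.
Qed.

Lemma phi_low B x : 0 < B -> B / 4 <= x <= 3 * B / 4 -> exp (- 16 / 3) <= phiD B 0 x.
Proof.
  intros HB Hx. unfold phiD. set (t := x / B).
  assert (Ht : 1 / 4 <= t <= 3 / 4).
  { unfold t. split; apply (Rmult_le_reg_r B); auto; replace (x / B * B) with x by (field; lra); lra. }
  rewrite Dm_in by lra. unfold Dform. simpl. 
  assert (Hu : 3 / 16 <= u t) by (unfold u; nra).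
  replace ((1 + t * 0) * / 1 * exp (- / u t) * 1) with (exp (- / u t)) by (field).
  destruct (Req_dec (-16/3) (- / u t)) as [E|E]. rewrite E; lra.
  left. apply exp_increasing.
  assert (/ u t <= 16 / 3).
  { replace (16/3) with (/ (3/16)) by field. apply Rinv_le_contravar; lra. }
  lra.
Qed.

Lemma key_pow C M h N1 : 1 <= C -> 1 <= M -> 0 <= h -> h + h = INR N1 ->
  Rpower (1 + (C * M) ^ 2) h <= Rpower (2 * C ^ 2) h * M ^ N1.
Proof.
  intros HC HM Hh Hhh.
  apply Rle_trans with (Rpower (2 * C ^ 2 * (M * M)) h).
  { apply Rle_Rpower_l; auto. split. nra. assert (1 <= C * M) by nra. nra. }
  rewrite <- Rpower_mult_distr by nra. apply Rmult_le_compat_l.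
  unfold Rpower; left; apply exp_pos.
  rewrite <- Rpower_mult_distr by lra. rewrite <- Rpower_plus, Hhh, Rpower_pow by lra. lra.
Qed.

Lemma A_bound b x a : b <> 0 -> Rabs b <= x <= 3 * Rabs b ->
  Rpower (Rabs x) (2 * a) <= exp (Rabs (2 * a) * (Rabs (ln (Rabs b)) + Rabs (ln (3 * Rabs b)))).
Proof.
  intros Hb Hx. assert (0 < Rabs b) by (apply Rabs_pos_lt; auto).
  rewrite Rabs_right by lra. unfold Rpower.
  assert (H1 : ln (Rabs b) <= ln x) by (apply ln_le; lra).
  assert (H2 : ln x <= ln (3 * Rabs b)) by (apply ln_le; lra).
  assert (H3 : Rabs (ln x) <= Rabs (ln (Rabs b)) + Rabs (ln (3 * Rabs b))).
  { unfold Rabs at 1. destruct (Rcase_abs (ln x)).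
    pose proof (Rle_abs (- ln (Rabs b))). rewrite Rabs_Ropp in *. pose proof (Rabs_pos (ln (3 * Rabs b))). lra.
    pose proof (Rle_abs (ln (3 * Rabs b))). pose proof (Rabs_pos (ln (Rabs b))). lra. }
  destruct (Req_dec (2 * a * ln x) (Rabs (2 * a) * (Rabs (ln (Rabs b)) + Rabs (ln (3 * Rabs b))))) as [E|E].
  rewrite E; lra. left. apply exp_increasing.
  assert (H4 : 2 * a * ln x <= Rabs (2 * a * ln x)) by apply Rle_abs.
  rewrite Rabs_mult in H4. pose proof (Rabs_pos (2 * a)). nra.
Qed.

Theorem lemma5p2 (N : nat) (alpha : list R) (a : R) (sigma : list R)
  (HN : (2 <= N)%nat)
  (Halen : length alpha = N)
  (Halpha : forall k : list Z, dotZN N k -> dotZ alpha k <> 0)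
  (Hslen : length sigma = N)
  (Hsig_nonneg : forall j : nat, (j < N)%nat -> 0 <= nth j sigma 0)
  (Hsig_sum : lsum (fun s => s) sigma <= (INR N - 1) / 2) :
  exists (f : nat -> list Z -> Cplx) (S : nat -> list (list Z)) (phi : R -> R),
    smooth phi /\ compact_support phi /\
    (forall n, NoDup (S n) /\ (forall k, In k (S n) -> dotZN N k)) /\
    (forall n k, ~ In k (S n) -> f n k = (0, 0)) /\
    (exists B : R, forall n, Gnorm2 alpha sigma a (S n) (f n) <= B) /\
    (forall M : R, exists n0 : nat, forall n, (n0 <= n)%nat ->
        snd (pairing alpha (S n) (f n) phi) = 0 /\
        M <= fst (pairing alpha (S n) (f n) phi)).
Proof.
  destruct N as [|N1]; [lia|].
  destruct alpha as [|b al]; [simpl in Halen; lia|].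
  assert (HN1 : (1 <= N1)%nat) by lia.
  assert (Hb : b <> 0).
  { intro Hb0. apply (Halpha (1%Z :: repeat 0%Z N1)).
    - split. simpl. rewrite repeat_length. reflexivity. simpl. intro H; inversion H.
    - rewrite dotZ_cons, dotZ_repeat0, Hb0. ring. }
  assert (Hab : 0 < Rabs b) by (apply Rabs_pos_lt; auto).
  assert (Hsig : forall x, In x sigma -> 0 <= x).
  { intros x Hx. destruct (In_nth _ _ 0 Hx) as [j [Hj Hj']]. subst x. apply Hsig_nonneg. lia. }
  set (B := 4 * Rabs b).
  set (ph := phiD B 0).
  set (L := lsum Rabs al).
  set (C := 3 + 2 * L / Rabs b).
  set (h := (INR (Datatypes.S N1) - 1) / 2).
  set (A0 := exp (Rabs (2 * a) * (Rabs (ln (Rabs b)) + Rabs (ln (3 * Rabs b))))).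
  set (p0 := exp (- 16 / 3) ^ 2).
  set (K2 := Rpower (2 * C ^ 2) h).
  set (c1 := p0 / (A0 * K2)).
  set (gden := fun k => Rpower (Rabs (dotZ (b :: al) k)) (2 * a) * weight sigma k).
  set (g := fun k => ph (dotZ (b :: al) k) ^ 2 / gden k).
  set (T := fun n => lsum g (Sset b al N1 n)).
  assert (HL : 0 <= L) by apply lsum_abs_nonneg.
  assert (HLb : 0 <= L / Rabs b) by (unfold Rdiv; apply Rmult_le_pos; [lra|left; apply Rinv_0_lt_compat; lra]).
  assert (HC : 1 <= C) by (unfold C; lra).
  assert (Hh : 0 <= h) by (unfold h; rewrite S_INR; pose proof (pos_INR N1); lra).
  assert (Hhh : h + h = INR N1) by (unfold h; rewrite S_INR; field).
  assert (HA0 : 0 < A0) by apply exp_pos.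
  assert (Hp0 : 0 < p0) by (apply pow_lt, exp_pos).
  assert (HK2 : 0 < K2) by (unfold K2, Rpower; apply exp_pos).
  assert (Hc1 : 0 < c1) by (unfold c1; apply Rdiv_lt_0_compat; nra).
  assert (Hwpos : forall s k, 0 < weight s k).
  { intros s k. unfold weight. generalize (combine s k). induction l; unfold lprod; cbn [fold_right]. lra.
    fold (lprod (fun p : R * Z => Rpower (1 + IZR (snd p) ^ 2) (fst p)) l).
    assert (0 < Rpower (1 + IZR (snd a0) ^ 2) (fst a0)) by (unfold Rpower; apply exp_pos). nra. }
  assert (Hgden : forall k, 0 < gden k).
  { intro k. unfold gden. apply Rmult_lt_0_compat. unfold Rpower; apply exp_pos. apply Hwpos. }
  assert (Hterm : forall j d, In d (box N1 (Z.of_nat (2 ^ j)) (2 ^ j)) ->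
            p0 / (A0 * (K2 * INR (2 ^ j) ^ N1)) <= g (mk b al d)).
  { intros j d Hd.
    set (M := (2 ^ j)%nat) in *.
    assert (HM : (1 <= M)%nat) by (unfold M; apply Nat.le_succ_l, Nat.neq_0_lt_0, Nat.pow_nonzero; lia).
    assert (HMr : 1 <= INR M) by (apply (le_INR 1); auto).
    assert (Hx := zsel_val b al d Hb).
    set (x := dotZ (b :: al) (mk b al d)).
    assert (Hxv : Rabs b <= x <= 3 * Rabs b) by (unfold x, mk; rewrite dotZ_cons; exact Hx).
    assert (Hph : exp (- 16 / 3) <= ph x) by (apply phi_low; unfold B; lra).
    assert (Hph2 : p0 <= ph x ^ 2) by (unfold p0; pose proof (exp_pos (-16/3)); nra).
    assert (HA : Rpower (Rabs x) (2 * a) <= A0) by (apply A_bound; auto).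
    assert (HW : weight sigma (mk b al d) <= K2 * INR M ^ N1).
    { eapply Rle_trans. apply (weight_bound _ _ (C * INR M)).
      - unfold mk; simpl. apply box_in in Hd. destruct Hd as [Hl _]. rewrite Hslen, Hl. reflexivity.
      - exact Hsig.
      - apply (member_entries b al N1 M d); auto.
      - eapply Rle_trans. apply (Rle_Rpower _ _ h). nra. unfold h; lra.
        apply key_pow; auto. }
    unfold g. fold x. unfold gden. fold x.
    assert (0 < Rpower (Rabs x) (2 * a)) by (unfold Rpower; apply exp_pos).
    assert (0 < weight sigma (mk b al d)) by apply Hwpos.
    assert (0 < K2 * INR M ^ N1) by (apply Rmult_lt_0_compat; auto; apply pow_lt; lra).
    unfold Rdiv. apply Rle_trans with (p0 * / (Rpower (Rabs x) (2 * a) * weight sigma (mk b al d))).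
    - apply Rmult_le_compat_l. lra. apply Rinv_le_contravar. nra.
      apply Rmult_le_compat; lra.
    - apply Rmult_le_compat_r. left; apply Rinv_0_lt_compat; nra. exact Hph2. }
  assert (HT : forall n, INR (Datatypes.S n) * c1 <= T n).
  { intro n. unfold T, Sset. rewrite lsum_flat_map.
    replace (INR (Datatypes.S n)) with (INR (length (seq 0 (Datatypes.S n)))) by (rewrite length_seq; auto).
    apply lsum_ge. intros j _. unfold block. rewrite lsum_map.
    eapply Rle_trans; [|apply lsum_ge; intros d Hd; apply Hterm; exact Hd].
    rewrite box_length, pow_INR. set (Mr := INR (2 ^ j)).
    assert (0 < Mr ^ N1) by (apply pow_lt; unfold Mr; apply lt_0_INR, Nat.neq_0_lt_0, Nat.pow_nonzero; lia).
    unfold c1. right. field. split; lra. }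
  assert (HTpos : forall n, 0 < T n) by (intro n; specialize (HT n); assert (0 < INR (Datatypes.S n)) by (apply lt_0_INR; lia); nra).
  set (f := fun n k => if in_dec (list_eq_dec Z.eq_dec) k (Sset b al N1 n)
                       then (ph (dotZ (b :: al) k) / gden k / sqrt (T n), 0) else (0, 0)).
  exists f, (Sset b al N1), ph.
  split; [apply phi_smooth; unfold B; lra|].
  split; [apply phi_supp; unfold B; lra|].
  split.
  { intro n. split. apply Sset_nodup; auto.
    intros k Hk. apply Sset_in in Hk. destruct Hk as [j [d [_ [Hk Hd]]]]. subst k.
    apply box_in in Hd. destruct Hd as [Hl Hz]. split.
    - unfold mk; simpl; rewrite Hl; reflexivity.
    - destruct d as [|z d]; [simpl in Hl; lia|]. unfold mk. destruct N1 as [|N2]; [lia|]. simpl. intro H; inversion H.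
      specialize (Hz z (or_introl eq_refl)).
      assert (0 < 2 ^ j)%nat by (apply Nat.neq_0_lt_0, Nat.pow_nonzero; lia). lia. }
  split.
  { intros n k Hk. unfold f. destruct (in_dec _ k _); [contradiction|reflexivity]. }
  split.
  { exists 1. intro n. unfold Gnorm2.
    rewrite (lsum_ext_in _ (fun k => g k * / T n)).
    - rewrite lsum_scal. fold (T n). rewrite Rinv_r. lra. specialize (HTpos n); lra.
    - intros k Hk. unfold f. destruct (in_dec _ k _); [|contradiction].
      unfold Cnorm2; simpl fst; simpl snd. unfold g.
      assert (0 < sqrt (T n)) by (apply sqrt_lt_R0; auto).
      assert (sqrt (T n) * sqrt (T n) = T n) by (apply sqrt_sqrt; specialize (HTpos n); lra).
      specialize (Hgden k). specialize (HTpos n). unfold gden in *.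
      set (s := sqrt (T n)) in *. rewrite <- H0.
      set (G := Rpower (Rabs (dotZ (b :: al) k)) (2 * a) * weight sigma k) in *.
      field. split; lra. }
  intro Mv.
  exists (Z.to_nat (up (Mv * Mv / c1))). intros n Hn.
  assert (Hfk : forall k, In k (Sset b al N1 n) -> f n k = (ph (dotZ (b :: al) k) / gden k / sqrt (T n), 0)).
  { intros k Hk. unfold f. destruct (in_dec _ k _); [reflexivity|contradiction]. }
  assert (HTn := HTpos n).
  assert (0 < sqrt (T n)) by (apply sqrt_lt_R0; auto).
  split.
  - unfold pairing; simpl snd. rewrite (lsum_ext_in _ (fun _ => 0)). apply lsum_zero.
    intros k Hk. rewrite Hfk by auto. simpl. ring.
  - unfold pairing; simpl fst. rewrite (lsum_ext_in _ (fun k => g k * / sqrt (T n))).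
    2: { intros k Hk. rewrite Hfk by auto. simpl fst. unfold g. specialize (Hgden k). field. split; lra. }
    rewrite lsum_scal. fold (T n).
    replace (T n * / sqrt (T n)) with (sqrt (T n)).
    2: { assert (E : sqrt (T n) * sqrt (T n) = T n) by (apply sqrt_sqrt; lra).
         set (s := sqrt (T n)) in *. rewrite <- E. field. lra. }
    destruct (Rle_or_lt Mv 0) as [HM|HM]. lra.
    rewrite <- (sqrt_square Mv) by lra. apply sqrt_le_1_alt.
    assert (Hz : forall z, IZR z <= INR (Z.to_nat z)).
    { intro z. destruct (Z_le_gt_dec 0 z).
      rewrite INR_IZR_INZ, Z2Nat.id by auto. lra.
      pose proof (pos_INR (Z.to_nat z)). assert (IZR z < 0) by (apply IZR_lt; lia). lra. }
    destruct (archimed (Mv * Mv / c1)) as [H1 _].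
    pose proof (Hz (up (Mv * Mv / c1))).
    assert (INR (Z.to_nat (up (Mv * Mv / c1))) <= INR n) by (apply le_INR; auto).
    specialize (HT n). rewrite S_INR in HT.
    assert (H4 : Mv * Mv / c1 < INR n + 1) by lra.
    assert (Mv * Mv < (INR n + 1) * c1).
    { apply (Rmult_lt_reg_r (/ c1)). apply Rinv_0_lt_compat; lra.
      replace ((INR n + 1) * c1 * / c1) with (INR n + 1) by (field; lra). exact H4. }
    lra.
Qed.
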